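(* Let $1\le m<n$. (a) If $m=1$, then for every $A\in\mathbb R^{1\times n}$ and all $0<p,q\le\infty$: $\mathrm{pginv}_{\mathrm{col}(p,q)}(A)=\mathrm{ginv}_p(A)$; consequently there is a full-rank $A_1\in\mathbb R^{1\times n}$ with $A_1^\dagger\in\mathrm{pginv}_{\mathrm{col}(p,q)}(A_1)\iff p=2$ for $0<p<\infty$, $0<q\le\infty$. (b) If $m\ge 2$, there exists a full-rank $A_4\in\mathbb R^{m\times n}$ such that for all $1\le p<\infty$ and $0<q<\infty$: $A_4^\dagger\in\mathrm{pginv}_{\mathrm{col}(p,q)}(A_4)\iff p=2$.
   Context: Generalized inverses are taken real: $\mathcal G(A)=\{X\in\mathbb R^{n\times m}:AX=I_m\}$, $\mathrm{ginv}_\nu(A)=\arg\min_{X\in\mathcal G(A)}\|X\|_\nu$, $\mathrm{pginv}_\mu(A)=\arg\min_{X\in\mathcal G(A)}\|XA\|_\mu$ (sets). For $M$ with columns $m_j$, $\|M\|_{\mathrm{col}(p,q)}=(\sum_j\|m_j\|_p^q)^{1/q}$ (maximum for $q=\infty$); entrywise $\|M\|_p=\|\mathrm{vec}(M)\|_p$. $A^\dagger=A^\top(AA^\top)^{-1}$. *)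

(* Defs.v *)
From Stdlib Require Import Reals ClassicalEpsilon.
Open Scope R_scope.

(* Matrices are represented as functions nat -> nat -> R; only the entries
   with indices below the stated dimensions are ever used. *)
Definition Mat := nat -> nat -> R.

Inductive Ext := Fin (p : R) | Inf.
Definition ext_pos (e : Ext) : Prop :=
  match e with Fin p => 0 < p | Inf => True end.

Fixpoint sumR (n : nat) (f : nat -> R) : R :=
  match n with O => 0 | S k => sumR k f + f k end.
Fixpoint maxR (n : nat) (f : nat -> R) : R :=
  match n with O => 0 | S k => Rmax (maxR k f) (f k) end.

(* x^y for x >= 0, with 0^y = 0 (y > 0 in all uses). *)
Definition rpow (x y : R) : R :=
  if Rlt_dec 0 x then Rpower x y else 0.

Definition vnorm (e : Ext) (n : nat) (v : nat -> R) : R :=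
  match e with
  | Fin p => rpow (sumR n (fun i => rpow (Rabs (v i)) p)) (/ p)
  | Inf => maxR n (fun i => Rabs (v i))
  end.

Definition vecM (r : nat) (M : Mat) : nat -> R :=
  fun k => M (Nat.modulo k r) (Nat.div k r).

Definition enorm (e : Ext) (r c : nat) (M : Mat) : R := vnorm e (r * c) (vecM r M).

Definition colnorm (p q : Ext) (r c : nat) (M : Mat) : R :=
  vnorm q c (fun j => vnorm p r (fun i => M i j)).

Definition mmul (k : nat) (A B : Mat) : Mat :=
  fun i j => sumR k (fun l => A i l * B l j).
Definition ident : Mat := fun i j => if Nat.eqb i j then 1 else 0.
Definition trM (A : Mat) : Mat := fun i j => A j i.

Definition is_ginv (m n : nat) (A X : Mat) : Prop :=
  forall i j, (i < m)%nat -> (j < m)%nat -> mmul n A X i j = ident i j.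

Definition ginv (nu : Ext) (m n : nat) (A X : Mat) : Prop :=
  is_ginv m n A X /\
  forall Y, is_ginv m n A Y -> enorm nu n m X <= enorm nu n m Y.

Definition pginv_col (p q : Ext) (m n : nat) (A X : Mat) : Prop :=
  is_ginv m n A X /\
  forall Y, is_ginv m n A Y ->
    colnorm p q n n (mmul m X A) <= colnorm p q n n (mmul m Y A).

(* full rank for m <= n: rows linearly independent (rank = m) *)
Definition full_rank (m n : nat) (A : Mat) : Prop :=
  forall c : nat -> R,
    (forall j, (j < n)%nat -> sumR m (fun i => c i * A i j) = 0) ->
    forall i, (i < m)%nat -> c i = 0.

(* matrix inverse of a k x k matrix (a chosen two-sided inverse, if any) *)
Definition is_inv (k : nat) (M Y : Mat) : Prop :=
  forall i j, (i < k)%nat -> (j < k)%nat ->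
    mmul k M Y i j = ident i j /\ mmul k Y M i j = ident i j.
Definition minv (k : nat) (M : Mat) : Mat :=
  epsilon (inhabits (fun _ _ => 0)) (is_inv k M).

Definition pinv (m n : nat) (A : Mat) : Mat :=
  mmul m (trM A) (minv m (mmul n A (trM A))).

(* Main.v *)
Require Import Defs.
From Stdlib Require Import Reals.
From Stdlib Require Import Lra Lia ClassicalEpsilon FunctionalExtensionality.
Open Scope R_scope.

Lemma rpow_ge0 x y : 0 <= rpow x y.
Proof. unfold rpow; destruct (Rlt_dec 0 x); [unfold Rpower; left; apply exp_pos|lra]. Qed.
Lemma rpow_gt0 x y : 0 < x -> 0 < rpow x y.
Proof. intro H; unfold rpow; destruct (Rlt_dec 0 x); [unfold Rpower; apply exp_pos|lra]. Qed.
Lemma rpow_0 y : rpow 0 y = 0.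
Proof. unfold rpow; destruct (Rlt_dec 0 0); lra. Qed.
Lemma rpow_pos x y : 0 < x -> rpow x y = Rpower x y.
Proof. intro H; unfold rpow; destruct (Rlt_dec 0 x); lra. Qed.
Lemma rpow_1 y : rpow 1 y = 1.
Proof. rewrite rpow_pos by lra. unfold Rpower. rewrite ln_1, Rmult_0_r. apply exp_0. Qed.
Lemma rpow_mult a b y : 0 <= a -> 0 <= b -> rpow (a*b) y = rpow a y * rpow b y.
Proof.
  intros Ha Hb. destruct Ha as [Ha|Ha]; [|subst; rewrite Rmult_0_l, !rpow_0; ring].
  destruct Hb as [Hb|Hb]; [|subst; rewrite Rmult_0_r, !rpow_0; ring].
  rewrite !rpow_pos by (try apply Rmult_lt_0_compat; lra).
  symmetry; apply Rpower_mult_distr; auto.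
Qed.
Lemma rpow_inv a p : 0 <= a -> p <> 0 -> rpow (rpow a p) (/p) = a.
Proof.
  intros Ha Hp. destruct Ha as [Ha|Ha]; [|subst; rewrite !rpow_0; auto].
  rewrite (rpow_pos a) by auto. rewrite rpow_pos by (unfold Rpower; apply exp_pos).
  rewrite Rpower_mult, Rinv_r by auto. apply Rpower_1; auto.
Qed.
Lemma rpow_le a b y : 0 < y -> 0 <= a <= b -> rpow a y <= rpow b y.
Proof.
  intros Hy [Ha Hab]. destruct Ha as [Ha|Ha]; [|subst; rewrite rpow_0; apply rpow_ge0].
  rewrite !rpow_pos by lra. apply Rle_Rpower_l; lra.
Qed.
Lemma rpow_lt a b y : 0 < y -> 0 <= a < b -> rpow a y < rpow b y.
Proof.
  intros Hy [Ha Hab]. destruct Ha as [Ha|Ha]; [|subst; rewrite rpow_0; apply rpow_gt0; lra].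
  rewrite !rpow_pos by lra. apply Rlt_Rpower_l; lra.
Qed.
Lemma rpow_le_inv a b y : 0 < y -> 0 <= a -> 0 <= b -> rpow a y <= rpow b y -> a <= b.
Proof.
  intros Hy Ha Hb H. destruct (Rle_lt_dec a b); auto.
  assert (rpow b y < rpow a y) by (apply rpow_lt; lra). lra.
Qed.
Lemma rpow_abs2 x : rpow (Rabs x) 2 = x * x.
Proof.
  destruct (Req_dec x 0). subst; rewrite Rabs_R0, rpow_0; ring.
  rewrite rpow_pos by (apply Rabs_pos_lt; auto).
  replace 2 with (INR 2) by (simpl; ring). rewrite Rpower_pow by (apply Rabs_pos_lt; auto).
  simpl. rewrite Rmult_1_r. rewrite <- Rabs_mult. apply Rabs_pos_eq. nra.
Qed.

Lemma sumR_ext n f g : (forall k, (k < n)%nat -> f k = g k) -> sumR n f = sumR n g.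
Proof. induction n; simpl; intros; auto. rewrite IHn by (intros; apply H; lia). rewrite H by lia; auto. Qed.
Lemma sumR_le n f g : (forall k, (k < n)%nat -> f k <= g k) -> sumR n f <= sumR n g.
Proof. induction n; simpl; intros; [lra|]. assert (f n <= g n) by (apply H; lia).
  assert (sumR n f <= sumR n g) by (apply IHn; intros; apply H; lia). lra. Qed.
Lemma sumR_lt n f g a : (a < n)%nat -> (forall k, (k < n)%nat -> f k <= g k) -> f a < g a -> sumR n f < sumR n g.
Proof. induction n; simpl; intros; [lia|].
  destruct (Nat.eq_dec a n). subst. assert (sumR n f <= sumR n g) by (apply sumR_le; intros; apply H0; lia). lra.
  assert (sumR n f < sumR n g) by (apply IHn; auto; lia). assert (f n <= g n) by (apply H0; lia). lra. Qed.
Lemma sumR_ge0 n f : (forall k, (k < n)%nat -> 0 <= f k) -> 0 <= sumR n f.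
Proof. intros. replace 0 with (sumR n (fun _ => 0)). apply sumR_le; auto.
  clear; induction n; simpl; auto; lra. Qed.
Lemma sumR_zero n f : (forall k, (k < n)%nat -> f k = 0) -> sumR n f = 0.
Proof. induction n; simpl; intros; auto. rewrite IHn by (intros; apply H; lia). rewrite H by lia; ring. Qed.
Lemma sumR_scal n c f : sumR n (fun k => c * f k) = c * sumR n f.
Proof. induction n; simpl; [ring|]. rewrite IHn; ring. Qed.
Lemma sumR_single n f a : (a < n)%nat -> (forall k, (k < n)%nat -> k <> a -> f k = 0) -> sumR n f = f a.
Proof. induction n; simpl; intros; [lia|].
  destruct (Nat.eq_dec a n). subst. rewrite sumR_zero; [ring|]. intros; apply H0; lia.
  rewrite IHn by (try lia; intros; apply H0; lia). rewrite (H0 n) by lia; ring. Qed.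
Lemma sumR_two n f : (2 <= n)%nat -> (forall k, (k < n)%nat -> (2 <= k)%nat -> f k = 0) -> sumR n f = f 0%nat + f 1%nat.
Proof. induction n; simpl; intros; [lia|].
  destruct (Nat.eq_dec n 1). subst. simpl. ring.
  rewrite IHn by (try lia; intros; apply H0; lia). rewrite (H0 n) by lia; ring. Qed.
Lemma sumR_ge1 n f a : (a < n)%nat -> (forall k, (k < n)%nat -> 0 <= f k) -> f a <= sumR n f.
Proof. induction n; simpl; intros; [lia|].
  destruct (Nat.eq_dec a n). subst. assert (0 <= sumR n f) by (apply sumR_ge0; intros; apply H0; lia). lra.
  assert (f a <= sumR n f) by (apply IHn; try lia; intros; apply H0; lia). assert (0 <= f n) by (apply H0; lia). lra. Qed.
Lemma sumR_ge2 n f : (2 <= n)%nat -> (forall k, (k < n)%nat -> 0 <= f k) -> f 0%nat + f 1%nat <= sumR n f.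
Proof. induction n; simpl; intros; [lia|].
  destruct (Nat.eq_dec n 1). subst. simpl. lra.
  assert (f 0%nat + f 1%nat <= sumR n f) by (apply IHn; try lia; intros; apply H0; lia). assert (0 <= f n) by (apply H0; lia). lra. Qed.
Lemma sumR_nz n f : sumR n f <> 0 -> exists k, (k < n)%nat /\ f k <> 0.
Proof. intros H. destruct (classic (exists k, (k < n)%nat /\ f k <> 0)) as [|H1]; auto.
  exfalso; apply H, sumR_zero. intros k Hk. destruct (Req_dec (f k) 0); auto. exfalso; apply H1; eauto. Qed.

Lemma maxR_ext n f g : (forall k, (k < n)%nat -> f k = g k) -> maxR n f = maxR n g.
Proof. induction n; simpl; intros; auto. rewrite IHn by (intros; apply H; lia). rewrite H by lia; auto. Qed.
Lemma maxR_scal n c f : 0 <= c -> maxR n (fun k => c * f k) = c * maxR n f.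
Proof. induction n; simpl; intros; [ring|]. rewrite IHn by auto. apply RmaxRmult; auto. Qed.
Lemma maxR_ge n f a : (a < n)%nat -> f a <= maxR n f.
Proof. induction n; simpl; intros; [lia|].
  destruct (Nat.eq_dec a n). subst. apply Rmax_r.
  eapply Rle_trans; [apply IHn; lia|apply Rmax_l]. Qed.

Lemma vnorm_ext e n u v : (forall k, (k < n)%nat -> u k = v k) -> vnorm e n u = vnorm e n v.
Proof. intros H; destruct e; simpl.
  - f_equal. apply sumR_ext; intros; rewrite H; auto.
  - apply maxR_ext; intros; rewrite H; auto. Qed.
Lemma vnorm_ge0 e n v : ext_pos e -> 0 <= vnorm e n v.
Proof. destruct e; simpl; intros. apply rpow_ge0.
  induction n; simpl; [lra|]. eapply Rle_trans; [apply IHn|apply Rmax_l]. Qed.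
Lemma vnorm_pos e n v k : (k < n)%nat -> v k <> 0 -> 0 < vnorm e n v.
Proof. intros Hk Hv; destruct e; simpl.
  - apply rpow_gt0. eapply Rlt_le_trans; [|apply (sumR_ge1 _ _ k); auto; intros; apply rpow_ge0].
    apply rpow_gt0, Rabs_pos_lt; auto.
  - eapply Rlt_le_trans; [|apply (maxR_ge _ _ k); auto]. apply Rabs_pos_lt; auto. Qed.
Lemma vnorm_scal e n c v : ext_pos e -> vnorm e n (fun k => c * v k) = Rabs c * vnorm e n v.
Proof. destruct e as [p|]; simpl; intros Hp.
  - rewrite (sumR_ext _ _ (fun k => rpow (Rabs c) p * rpow (Rabs (v k)) p)).
    2:{ intros; rewrite Rabs_mult, rpow_mult; auto; apply Rabs_pos. }
    rewrite sumR_scal, rpow_mult; [|apply rpow_ge0|apply sumR_ge0; intros; apply rpow_ge0].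
    rewrite rpow_inv; auto. apply Rabs_pos. lra.
  - rewrite (maxR_ext _ _ (fun k => Rabs c * Rabs (v k))). apply maxR_scal, Rabs_pos.
    intros; apply Rabs_mult. Qed.
Lemma vnorm_abs e n v : vnorm e n (fun k => Rabs (v k)) = vnorm e n v.
Proof. apply vnorm_ext; intros. destruct e; simpl; auto. Abort.
Lemma vnorm_abs e n v : vnorm e n (fun k => Rabs (v k)) = vnorm e n v.
Proof. destruct e; simpl. f_equal; apply sumR_ext; intros; rewrite Rabs_Rabsolu; auto.
  apply maxR_ext; intros; rewrite Rabs_Rabsolu; auto. Qed.

Lemma enorm1 e n X : enorm e n 1 X = vnorm e n (fun k => X k 0%nat).
Proof. unfold enorm. rewrite Nat.mul_1_r. apply vnorm_ext. intros k Hk.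
  unfold vecM. rewrite Nat.mod_small, Nat.div_small by auto. auto. Qed.

Lemma clause1 n (A : Mat) (p q : Ext) : ext_pos p -> ext_pos q ->
  forall X : Mat, pginv_col p q 1 n A X <-> ginv p 1 n A X.
Proof.
  intros Hp Hq X.
  set (K := vnorm q n (fun j => Rabs (A 0%nat j))).
  assert (HC : forall Y, colnorm p q n n (mmul 1 Y A) = vnorm p n (fun k => Y k 0%nat) * K).
  { intros Y. unfold colnorm.
    rewrite (vnorm_ext q n _ (fun j => vnorm p n (fun k => Y k 0%nat) * Rabs (A 0%nat j))).
    - rewrite vnorm_scal, Rabs_pos_eq; auto. apply vnorm_ge0; auto.
    - intros j Hj. rewrite (vnorm_ext p n _ (fun k => A 0%nat j * Y k 0%nat)).
      rewrite vnorm_scal; auto; ring. intros; unfold mmul; simpl; ring. }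
  assert (HK : forall Y, is_ginv 1 n A Y -> 0 < K).
  { intros Y HY. specialize (HY 0%nat 0%nat ltac:(lia) ltac:(lia)).
    unfold mmul, ident in HY; simpl in HY.
    destruct (sumR_nz n (fun l => A 0%nat l * Y l 0%nat)) as [l [Hl Hl2]]. rewrite HY; lra.
    apply (vnorm_pos _ _ _ l Hl). intro H. apply Hl2. destruct (Req_dec (A 0%nat l) 0) as [E|E]; [rewrite E; ring|]. exfalso; apply Rabs_no_R0 in E; auto. }
  unfold pginv_col, ginv. split; intros [HX H]; split; auto; intros Y HY; specialize (H Y HY);
  rewrite !HC in *; rewrite !enorm1 in *; specialize (HK X HX).
  - apply Rmult_le_reg_r in H; auto.
  - apply Rmult_le_compat_r; lra.
Qed.

Lemma deriv_descent f l : derivable_pt_lim f 0 l -> l <> 0 ->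
  forall r, 0 < r -> exists s, Rabs s < r /\ f s < f 0.
Proof.
  intros Hd Hl r Hr.
  assert (He : 0 < Rabs l / 2) by (apply Rabs_pos_lt in Hl; lra).
  destruct (Hd _ He) as [[d Hdp] Hdd].
  set (h := Rmin (d/2) (r/2)).
  assert (Hh : 0 < h) by (unfold h; apply Rmin_glb_lt; lra).
  assert (Hhd : h < d) by (unfold h; eapply Rle_lt_trans; [apply Rmin_l|lra]).
  assert (Hhr : h < r) by (unfold h; eapply Rle_lt_trans; [apply Rmin_r|lra]).
  destruct (Rle_lt_dec 0 l) as [Hl0|Hl0].
  - exists (-h). assert (Hdd2 := Hdd (-h)); simpl in Hdd2. assert (Ha : Rabs (-h) < d) by (rewrite Rabs_Ropp, Rabs_pos_eq; lra). specialize (Hdd2 ltac:(lra) Ha). rename Hdd2 into Hdd0. rename Hdd into Hddx. rename Hdd0 into Hdd.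
    rewrite (Rabs_pos_eq l) in Hdd by lra. rewrite Rabs_Ropp, Rabs_pos_eq by lra. split; auto.
    rewrite Rplus_0_l in Hdd. apply Rabs_def2 in Hdd. destruct Hdd as [H1 H2].
    set (D := f (-h) - f 0) in *.
    assert (D / (-h) > 0) by lra. unfold Rdiv in H. 
    assert (D * / - h * (-h) = D) by (field; lra).
    set (t := D * / - h) in *. assert (0 < t * h) by (apply Rmult_lt_0_compat; lra).
    replace (t * - h) with (-(t*h)) in H0 by ring. unfold D in H0. lra.
  - exists h. assert (Hdd2 := Hdd h); simpl in Hdd2. assert (Ha : Rabs h < d) by (rewrite Rabs_pos_eq; lra). specialize (Hdd2 ltac:(lra) Ha). rename Hdd2 into Hdd0. rename Hdd into Hddx. rename Hdd0 into Hdd.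
    rewrite (Rabs_left l) in Hdd by lra. rewrite Rabs_pos_eq by lra. split; auto.
    rewrite Rplus_0_l in Hdd. apply Rabs_def2 in Hdd. destruct Hdd as [H1 H2].
    set (D := f h - f 0) in *.
    assert (D / h < 0) by lra. unfold Rdiv in H.
    assert (D * / h * h = D) by (field; lra).
    set (t := D * / h) in *. assert (0 < (-t) * h) by (apply Rmult_lt_0_compat; lra).
    replace ((-t) * h) with (-(t*h)) in H3 by ring. unfold D in H0. lra.
Qed.

Lemma core_neq p : 0 < p -> p <> 2 -> exists y0 y1, y0 + 2 * y1 = 1 /\
  rpow (Rabs y0) p + rpow (Rabs y1) p < rpow (/5) p + rpow (2/5) p.
Proof.
  intros Hp Hp2.
  set (f := fun s => Rpower (/5 + 2 * s) p + Rpower (2/5 + -1 * s) p).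
  set (l := p * Rpower (/5) (p-1) * 2 + p * Rpower (2/5) (p-1) * (-1)).
  assert (Hd : derivable_pt_lim f 0 l).
  { unfold f, l. apply derivable_pt_lim_plus.
    - replace (p * Rpower (/5) (p-1) * 2) with (p * Rpower (/5 + 2 * 0) (p-1) * (0 + 2 * 1)) by (f_equal; [f_equal; f_equal; ring|ring]).
      apply (derivable_pt_lim_comp (fun s => /5 + 2 * s) (fun x => Rpower x p)).
      + apply derivable_pt_lim_plus. apply derivable_pt_lim_const.
        apply derivable_pt_lim_scal. apply derivable_pt_lim_id.
      + apply derivable_pt_lim_power. lra.
    - replace (p * Rpower (2/5) (p-1) * (-1)) with (p * Rpower (2/5 + -1 * 0) (p-1) * (0 + -1 * 1)) by (f_equal; [f_equal; f_equal; ring|ring]).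
      apply (derivable_pt_lim_comp (fun s => 2/5 + -1 * s) (fun x => Rpower x p)).
      + apply derivable_pt_lim_plus. apply derivable_pt_lim_const.
        apply derivable_pt_lim_scal. apply derivable_pt_lim_id.
      + apply derivable_pt_lim_power. lra. }
  assert (Hl : l <> 0).
  { unfold l. intro H.
    replace (2/5) with (2 * /5) in H by (unfold Rdiv; ring).
    rewrite <- Rpower_mult_distr in H by lra.
    assert (0 < Rpower (/5) (p-1)) by (unfold Rpower; apply exp_pos).
    assert (E : Rpower 2 (p-1) = Rpower 2 1).
    { rewrite Rpower_1 by lra. apply (Rmult_eq_reg_l (p * Rpower (/5) (p-1))).
      lra. apply Rmult_integral_contrapositive; split; lra. }
    unfold Rpower in E. apply exp_inv in E.
    assert (0 < ln 2) by (rewrite <- ln_1; apply ln_increasing; lra).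
    apply Rmult_eq_reg_r in E; lra. }
  destruct (deriv_descent f l Hd Hl (/10)) as [s [Hs Hfs]]. lra.
  apply Rabs_def2 in Hs.
  exists (/5 + 2 * s), (2/5 + -1 * s). split. field.
  rewrite !Rabs_pos_eq by lra. rewrite !rpow_pos by lra.
  unfold f in Hfs. replace (/5 + 2 * 0) with (/5) in Hfs by ring.
  replace (2/5 + -1 * 0) with (2/5) in Hfs by ring. auto.
Qed.

Lemma core_eq y0 y1 : y0 + 2 * y1 = 1 ->
  rpow (Rabs (/5)) 2 + rpow (Rabs (2/5)) 2 <= rpow (Rabs y0) 2 + rpow (Rabs y1) 2.
Proof. intros H. rewrite !rpow_abs2. replace (/5 * /5 + 2/5 * (2/5)) with (/5) by field. assert (E: 5*(y0*y0+y1*y1) = 1 + (2*y0-y1)*(2*y0-y1)) by (assert (y0 = 1 - 2*y1) by lra; subst y0; ring). assert (0 <= (2*y0-y1)*(2*y0-y1)) by apply Rle_0_sqr. apply (Rmult_le_reg_l 5); [lra|]. rewrite Rinv_r by lra. lra. Qed.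

Definition A0 : Mat := fun i j => if Nat.eqb i 0 then (if Nat.eqb j 0 then 1 else if Nat.eqb j 1 then 2 else 0)
  else (if Nat.eqb j (S i) then 1 else 0).
Definition Yg (y0 y1 : R) : Mat := fun k i => if Nat.eqb i 0 then (if Nat.eqb k 0 then y0 else if Nat.eqb k 1 then y1 else 0)
  else (if Nat.eqb k (S i) then 1 else 0).
Definition Xd := Yg (/5) (2/5).

Ltac ceq := repeat match goal with |- context [Nat.eqb ?a ?b] => destruct (Nat.eqb_spec a b) end;
  subst; try lia; try ring.

Section S.
Variables (m n : nat) (Hm : (1 <= m)%nat) (Hmn : (m < n)%nat).

Lemma rowP X i j : (i < m)%nat -> mmul n A0 X i j = if Nat.eqb i 0 then X 0%nat j + 2 * X 1%nat j else X (S i) j.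
Proof. intros Hi. unfold mmul. destruct (Nat.eqb_spec i 0).
  - subst. rewrite sumR_two by (try lia; intros; unfold A0; ceq). unfold A0; simpl; ring.
  - rewrite (sumR_single _ _ (S i)) by (try lia; intros; unfold A0; ceq). unfold A0; ceq. Qed.

Definition Pform (X : Mat) k j := if Nat.eqb j 0 then X k 0%nat else if Nat.eqb j 1 then 2 * X k 0%nat
  else if Nat.leb j m then X k (j-1)%nat else 0.

Lemma colP X k j : mmul m X A0 k j = Pform X k j.
Proof. unfold mmul, Pform. destruct (Nat.eqb_spec j 0).
  - subst. rewrite (sumR_single _ _ 0) by (try lia; intros; unfold A0; ceq). unfold A0; simpl; ring.
  - destruct (Nat.eqb_spec j 1).
    + subst. rewrite (sumR_single _ _ 0) by (try lia; intros; unfold A0; ceq). unfold A0; simpl; ring.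
    + destruct (Nat.leb_spec j m).
      * rewrite (sumR_single _ _ (j-1)) by (try lia; intros; unfold A0; ceq). unfold A0; ceq.
      * apply sumR_zero. intros; unfold A0; ceq. Qed.

Lemma Yg_ginv y0 y1 : y0 + 2 * y1 = 1 -> is_ginv m n A0 (Yg y0 y1).
Proof. intros H i j Hi Hj. rewrite rowP by auto. unfold Yg, ident. ceq; lra. Qed.

Lemma ginv_facts X : is_ginv m n A0 X -> X 0%nat 0%nat + 2 * X 1%nat 0%nat = 1 /\
  forall i, (1 <= i < m)%nat -> X (S i) i = 1.
Proof. intros H. split.
  - specialize (H 0%nat 0%nat ltac:(lia) ltac:(lia)). rewrite rowP in H by lia. simpl in H. rewrite H; reflexivity.
  - intros i Hi. specialize (H i i ltac:(lia) ltac:(lia)). rewrite rowP in H by lia.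
    unfold ident in H. rewrite Nat.eqb_refl in H. destruct (Nat.eqb_spec i 0); [lia|auto]. Qed.

Lemma A0_full : full_rank m n A0.
Proof. intros c Hc i Hi.
  destruct (Nat.eqb_spec i 0).
  - subst. specialize (Hc 0%nat ltac:(lia)).
    rewrite (sumR_single _ _ 0) in Hc by (try lia; intros; unfold A0; ceq). unfold A0 in Hc; simpl in Hc. lra.
  - specialize (Hc (S i) ltac:(lia)).
    rewrite (sumR_single _ _ i) in Hc by (try lia; intros; unfold A0; ceq). unfold A0 in Hc. revert Hc; ceq.
    all: lra. Qed.

Definition Mdiag i := if Nat.eqb i 0 then 5 else 1.

Lemma AAT i j : (i < m)%nat -> (j < m)%nat -> mmul n A0 (trM A0) i j = if Nat.eqb i j then Mdiag i else 0.
Proof. intros Hi Hj. rewrite rowP by auto. unfold trM, A0, Mdiag. ceq. Qed.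

Lemma pinv_eq : forall k i, (i < m)%nat -> pinv m n A0 k i = Xd k i.
Proof.
  set (M := mmul n A0 (trM A0)).
  assert (Hex : exists Y, is_inv m M Y).
  { exists (fun i j => if Nat.eqb i j then / Mdiag i else 0). intros i j Hi Hj. unfold mmul. split.
    - rewrite (sumR_single _ _ i) by (try lia; intros; unfold M; rewrite AAT by lia; ceq).
      unfold M; rewrite AAT by lia. unfold ident, Mdiag. ceq; field.
    - rewrite (sumR_single _ _ i) by (try lia; intros; ceq).
      unfold M; rewrite AAT by lia. unfold ident, Mdiag. ceq; field. }
  pose proof (epsilon_spec (inhabits (fun _ _ => 0)) (is_inv m M) Hex) as HY.
  fold (minv m M) in HY. set (Y := minv m M) in *.
  assert (HYv : forall i j, (i < m)%nat -> (j < m)%nat -> Y i j = if Nat.eqb i j then / Mdiag i else 0).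
  { intros i j Hi Hj. destruct (HY i j Hi Hj) as [_ H]. unfold mmul in H.
    rewrite (sumR_single _ _ j) in H by (try lia; intros; unfold M; rewrite AAT by lia; ceq).
    unfold M in H; rewrite AAT in H by lia. unfold ident, Mdiag in *. revert H; ceq; intros; try field; try lra.
    all: first [apply (Rmult_eq_reg_r 5); [rewrite H; field|lra] | apply (Rmult_eq_reg_r 1); [rewrite H; field|lra] | idtac]. }
  intros k i Hi. unfold pinv. fold M. fold Y. unfold mmul.
  rewrite (sumR_single _ _ i) by (try lia; intros; rewrite HYv by lia; ceq).
  rewrite HYv by lia. unfold trM, A0, Xd, Yg, Mdiag. ceq; field.
Qed.

End S.

Lemma transfer_pg p q m n A X X' : (forall k i, (i < m)%nat -> X k i = X' k i) ->
  (pginv_col p q m n A X <-> pginv_col p q m n A X').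
Proof.
  intros H.
  assert (E1 : mmul m X A = mmul m X' A).
  { unfold mmul. apply functional_extensionality; intro k; apply functional_extensionality; intro j.
    apply sumR_ext; intros; rewrite H; auto. }
  assert (E2 : forall i j, (j < m)%nat -> mmul n A X i j = mmul n A X' i j).
  { intros; unfold mmul; apply sumR_ext; intros; rewrite H; auto. }
  unfold pginv_col, is_ginv. rewrite E1. split; intros [H1 H2]; split; auto; intros; [rewrite <- E2|rewrite E2]; auto.
Qed.

Section T.
Variables (m n : nat) (Hm : (1 <= m)%nat) (Hmn : (m < n)%nat) (p : R) (Hp : 0 < p).

Definition cS X j := sumR n (fun k => rpow (Rabs (Pform m X k j)) p).
Definition c0 (X : Mat) := sumR n (fun k => rpow (Rabs (X k 0%nat)) p).

Lemma cS0 X : cS X 0 = c0 X.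
Proof. reflexivity. Qed.
Lemma cS_ge0 X j : 0 <= cS X j.
Proof. apply sumR_ge0; intros; apply rpow_ge0. Qed.
Lemma cS1 X : cS X 1 = rpow 2 p * c0 X.
Proof. unfold cS, c0. rewrite <- sumR_scal. apply sumR_ext. intros k _. unfold Pform; simpl.
  rewrite Rabs_mult, rpow_mult, (Rabs_pos_eq 2) by (try apply Rabs_pos; lra). auto. Qed.
Lemma c0_Yg y0 y1 : c0 (Yg y0 y1) = rpow (Rabs y0) p + rpow (Rabs y1) p.
Proof. unfold c0. rewrite sumR_two by (try lia; intros; unfold Yg; ceq; rewrite Rabs_R0, rpow_0; auto).
  unfold Yg; simpl; auto. Qed.
Lemma c0_ginv X : is_ginv m n A0 X -> rpow (Rabs (X 0%nat 0%nat)) p + rpow (Rabs (X 1%nat 0%nat)) p <= c0 X.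
Proof. intros; unfold c0; apply (sumR_ge2 n (fun k => rpow (Rabs (X k 0%nat)) p)); try lia; intros; apply rpow_ge0. Qed.
Lemma cS_big X j : (m < j)%nat -> cS X j = 0.
Proof. intros. apply sumR_zero; intros. unfold Pform. ceq. destruct (Nat.leb_spec j m); try lia.
  rewrite Rabs_R0, rpow_0; auto. Qed.
Lemma cS_mid_Xd j : (2 <= j <= m)%nat -> cS Xd j = 1.
Proof. intros. unfold cS. rewrite (sumR_single _ _ j) by (try lia; intros; unfold Pform, Xd, Yg; ceq;
  destruct (Nat.leb_spec j m); try lia; ceq; rewrite Rabs_R0, rpow_0; auto).
  unfold Pform, Xd, Yg; ceq. destruct (Nat.leb_spec j m); try lia. ceq; rewrite Rabs_R1, rpow_1; auto.
  Qed.
Lemma cS_mid X j : is_ginv m n A0 X -> (2 <= j <= m)%nat -> 1 <= cS X j.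
Proof. intros HX Hj. destruct (ginv_facts m n Hm Hmn X HX) as [_ H].
  eapply Rle_trans; [|apply (sumR_ge1 _ _ j); [lia|intros; apply rpow_ge0]].
  unfold Pform. ceq. destruct (Nat.leb_spec j m); try lia.
  replace j with (S (j-1)) at 1 by lia. rewrite H by lia. rewrite Rabs_R1, rpow_1; lra. Qed.
Lemma cS_Yg y0 y1 j : (2 <= j)%nat -> cS (Yg y0 y1) j = cS Xd j.
Proof. intros. apply sumR_ext; intros. unfold Pform, Xd, Yg. ceq. Qed.

Variables (q : R) (Hq : 0 < q).
Definition F (u : nat -> R) := rpow (sumR n (fun j => rpow (Rabs (rpow (u j) (/p))) q)) (/q).

Lemma colF X : colnorm (Fin p) (Fin q) n n (mmul m X A0) = F (cS X).
Proof. unfold colnorm, F; simpl. f_equal. apply sumR_ext; intros. f_equal. f_equal. f_equal.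
  apply sumR_ext; intros. rewrite (colP m n Hm Hmn); auto. Qed.

Lemma Fmono u v : (forall j, (j < n)%nat -> 0 <= u j <= v j) -> F u <= F v.
Proof. intros H. unfold F. apply rpow_le. apply Rinv_0_lt_compat; lra.
  split. apply sumR_ge0; intros; apply rpow_ge0.
  apply sumR_le; intros j Hj. rewrite !Rabs_pos_eq by apply rpow_ge0.
  apply rpow_le; auto. split. apply rpow_ge0. apply rpow_le. apply Rinv_0_lt_compat; lra. apply H; auto. Qed.
Lemma Fstrict u v : (forall j, (j < n)%nat -> 0 <= u j <= v j) -> u 0%nat < v 0%nat -> F u < F v.
Proof. intros H H0. unfold F. apply rpow_lt. apply Rinv_0_lt_compat; lra.
  split. apply sumR_ge0; intros; apply rpow_ge0.
  apply (sumR_lt _ _ _ 0); [lia| |].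
  - intros j Hj. rewrite !Rabs_pos_eq by apply rpow_ge0.
    apply rpow_le; auto. split. apply rpow_ge0. apply rpow_le. apply Rinv_0_lt_compat; lra. apply H; auto.
  - rewrite !Rabs_pos_eq by apply rpow_ge0.
    apply rpow_lt; auto. split. apply rpow_ge0. apply rpow_lt. apply Rinv_0_lt_compat; lra.
    split; auto. apply H; lia. Qed.

Lemma main_b : pginv_col (Fin p) (Fin q) m n A0 (pinv m n A0) <-> p = 2.
Proof.
  rewrite (transfer_pg _ _ _ _ _ _ Xd) by (apply pinv_eq; auto).
  unfold pginv_col. split.
  - intros [HX Hopt]. destruct (Req_dec p 2) as [|Hne]; auto. exfalso.
    destruct (core_neq p Hp Hne) as [y0 [y1 [Hy Hlt]]].
    specialize (Hopt (Yg y0 y1) (Yg_ginv m n Hm Hmn y0 y1 Hy)).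
    rewrite !colF in Hopt.
    assert (F (cS (Yg y0 y1)) < F (cS Xd)); [|lra].
    apply Fstrict.
    + intros j Hj. split; [apply cS_ge0|].
      destruct j as [|[|j]].
      * rewrite !cS0, c0_Yg. unfold Xd; rewrite c0_Yg. rewrite (Rabs_pos_eq (/5)), (Rabs_pos_eq (2/5)) by lra. lra.
      * rewrite !cS1. apply Rmult_le_compat_l. apply rpow_ge0. rewrite c0_Yg. unfold Xd; rewrite c0_Yg.
        rewrite (Rabs_pos_eq (/5)), (Rabs_pos_eq (2/5)) by lra. lra.
      * rewrite cS_Yg by lia. lra.
    + rewrite !cS0, c0_Yg. unfold Xd; rewrite c0_Yg. rewrite (Rabs_pos_eq (/5)), (Rabs_pos_eq (2/5)) by lra. lra.
  - intros Hp2. split. apply Yg_ginv; auto; field.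
    intros Y HY. rewrite !colF. apply Fmono. intros j Hj. split; [apply cS_ge0|].
    assert (H0 : c0 Xd <= c0 Y).
    { unfold Xd; rewrite c0_Yg. eapply Rle_trans; [|apply c0_ginv; auto].
      rewrite Hp2. apply core_eq. apply (ginv_facts m n Hm Hmn Y HY). }
    destruct j as [|[|j]].
    + rewrite !cS0; auto.
    + rewrite !cS1. apply Rmult_le_compat_l; auto. apply rpow_ge0.
    + destruct (Nat.leb_spec (S (S j)) m).
      * rewrite cS_mid_Xd by lia. apply cS_mid; auto; lia.
      * rewrite !cS_big by lia; lra.
Qed.
End T.

Lemma main_a2 n (Hn : (1 < n)%nat) p q : 0 < p -> ext_pos q ->
  (pginv_col (Fin p) q 1 n A0 (pinv 1 n A0) <-> p = 2).
Proof.
  intros Hp Hq. assert (H1 : (1 <= 1)%nat) by lia.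
  rewrite (transfer_pg _ _ _ _ _ _ Xd) by (apply pinv_eq; auto).
  rewrite clause1 by (simpl; auto).
  assert (E : forall X, enorm (Fin p) n 1 X = rpow (c0 n p X) (/p)).
  { intros X; rewrite enorm1; reflexivity. }
  unfold ginv. split.
  - intros [HX Hopt]. destruct (Req_dec p 2) as [|Hne]; auto. exfalso.
    destruct (core_neq p Hp Hne) as [y0 [y1 [Hy Hlt]]].
    specialize (Hopt (Yg y0 y1) (Yg_ginv 1 n H1 Hn y0 y1 Hy)). rewrite !E in Hopt.
    apply rpow_le_inv in Hopt; [| apply Rinv_0_lt_compat; lra | apply sumR_ge0; intros; apply rpow_ge0 | apply sumR_ge0; intros; apply rpow_ge0].
    unfold Xd in Hopt; rewrite !(c0_Yg 1 n H1 Hn p) in Hopt. rewrite (Rabs_pos_eq (/5)), (Rabs_pos_eq (2/5)) in Hopt by lra. lra.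
  - intros Hp2. split. apply Yg_ginv; auto; field.
    intros Y HY. rewrite !E. apply rpow_le. apply Rinv_0_lt_compat; lra.
    split. apply sumR_ge0; intros; apply rpow_ge0.
    unfold Xd; rewrite (c0_Yg 1 n H1 Hn p). eapply Rle_trans; [|apply (c0_ginv 1 n H1 Hn p Y)]; auto.
    rewrite Hp2. apply core_eq. apply (ginv_facts 1 n H1 Hn Y HY).
Qed.

Theorem theorem4 (m n : nat) (Hm : (1 <= m)%nat) (Hmn : (m < n)%nat) :
  (m = 1%nat ->
     (forall (A : Mat) (p q : Ext), ext_pos p -> ext_pos q ->
        forall X : Mat, pginv_col p q m n A X <-> ginv p m n A X)
     /\
     (exists A1 : Mat, full_rank m n A1 /\
        forall (p : R) (q : Ext), 0 < p -> ext_pos q ->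
          (pginv_col (Fin p) q m n A1 (pinv m n A1) <-> p = 2)))
  /\
  ((2 <= m)%nat ->
     exists A4 : Mat, full_rank m n A4 /\
       forall p q : R, 1 <= p -> 0 < q ->
         (pginv_col (Fin p) (Fin q) m n A4 (pinv m n A4) <-> p = 2)).
Proof.
  split.
  - intros ->. split.
    + intros; apply clause1; auto.
    + exists A0. split. apply A0_full; lia. intros; apply main_a2; auto.
  - intros H2. exists A0. split. apply A0_full; lia.
    intros p q Hp Hq. apply main_b; auto; lra.
Qed.
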